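(* Let $H:\mathbb{R}^n\rightrightarrows\mathbb{R}^n$ be a convex process such that $\operatorname{dom}H+\mathcal{R}_-=\mathbb{R}^n$. Then $\mathcal{F}(H)^-\cap\operatorname{cl}(\mathcal{F}(H^+))=\{0\}$ and $\mathcal{F}(H)^-\cap\operatorname{cl}(\mathcal{F}(H^-))=\{0\}$.
   Context: A set-valued map $H:\mathbb{R}^n\rightrightarrows\mathbb{R}^n$ is a convex process (resp. linear process) if its graph $\operatorname{graph}(H)=\{(x,y)\mid y\in H(x)\}$ is a convex cone (resp. a subspace); $\operatorname{dom}(H)=\{x\mid H(x)\neq\emptyset\}$. For a set-valued map $G$, a trajectory is a sequence $(x_k)_{k\ge0}$ with $x_{k+1}\in G(x_k)$ for all $k\ge0$; the feasible set $\mathcal{F}(G)$ is the set of all $\xi$ such that there is a trajectory with $x_0=\xi$. A $q$-step trajectory is a finite sequence $(x_k)_{k=0}^q$ with $x_{k+1}\in G(x_k)$ for $0\le k<q$; the reachable set $\mathcal{R}(G)$ is the set of all $\xi$ for which there exist $q\ge 0$ and a $q$-step trajectory with $x_0=0$, $x_q=\xi$. For a convex process $H$, $L_-$ is the linear process with $\operatorname{graph}(L_-)=\operatorname{graph}(H)\cap(-\operatorname{graph}(H))$, and $\mathcal{R}_-:=\mathcal{R}(L_-)$. For a set $\mathcal{C}$, its negative polar cone is $\mathcal{C}^-=\{y\mid\langle x,y\rangle\le0\ \forall x\in\mathcal{C}\}$. The negative and positive dual processes are defined by $p\in H^-(q)\iff\langle p,x\rangle\ge\langle q,y\rangle$ for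 all $(x,y)\in\operatorname{graph}(H)$, and $p\in H^+(q)\iff\langle p,x\rangle\le\langle q,y\rangle$ for all $(x,y)\in\operatorname{graph}(H)$. $\operatorname{cl}$ denotes closure. *)

(* Defs.v *)
From HB Require Import structures.
From mathcomp Require Import all_boot all_order all_algebra.
From mathcomp Require Import all_classical all_reals all_analysis.
Set Implicit Arguments. Unset Strict Implicit. Unset Printing Implicit Defensive.
Import Order.TTheory GRing.Theory Num.Theory.
Import numFieldNormedType.Exports.
Local Open Scope classical_set_scope.
Local Open Scope ring_scope.

Section Defs.
Variables (R : realType) (n : nat).
Notation V := 'rV[R]_n.

Definition dotv (x y : V) : R := \sum_(i < n) x ord0 i * y ord0 i.

Definition svmap := V -> set V.

Definition graph (H : svmap) : set (V * V) := [set p | H p.1 p.2].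

Definition dom (H : svmap) : set V := [set x | exists y, H x y].

Definition convex_cone (C : set (V * V)) : Prop :=
  C (0, 0) /\
  (forall p q, C p -> C q -> C (p.1 + q.1, p.2 + q.2)) /\
  (forall (t : R) p, 0 <= t -> C p -> C (t *: p.1, t *: p.2)).

Definition subspace (C : set (V * V)) : Prop :=
  C (0, 0) /\
  (forall p q, C p -> C q -> C (p.1 + q.1, p.2 + q.2)) /\
  (forall (t : R) p, C p -> C (t *: p.1, t *: p.2)).

Definition convex_process (H : svmap) : Prop := convex_cone (graph H).
Definition linear_process (H : svmap) : Prop := subspace (graph H).

Definition trajectory (G : svmap) (x : nat -> V) : Prop :=
  forall k, G (x k) (x k.+1).

Definition feasible (G : svmap) : set V :=
  [set xi | exists x : nat -> V, x 0%N = xi /\ trajectory G x].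

Definition reachable (G : svmap) : set V :=
  [set xi | exists (q : nat) (x : nat -> V),
     x 0%N = 0 /\ x q = xi /\ (forall k, (k < q)%N -> G (x k) (x k.+1))].

Definition Lminus (H : svmap) : svmap := fun x y => H x y /\ H (- x) (- y).

Definition Rminus (H : svmap) : set V := reachable (Lminus H).

Definition neg_polar (C : set V) : set V :=
  [set y | forall x, C x -> dotv x y <= 0].

Definition neg_dual (H : svmap) : svmap :=
  fun q p => forall x y, H x y -> dotv q y <= dotv p x.

Definition pos_dual (H : svmap) : svmap :=
  fun q p => forall x y, H x y -> dotv p x <= dotv q y.

End Defs.

(* Main.v *)
Require Import Defs.
From HB Require Import structures.
From mathcomp Require Import all_boot all_order all_algebra.
From mathcomp Require Import all_classical all_reals all_analysis.
Import Order.TTheory GRing.Theory Num.Theory.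
Import numFieldNormedType.Exports.
Local Open Scope classical_set_scope.
Local Open Scope ring_scope.

Section Aux.
Variables (R : realType) (n : nat).
Notation V := 'rV[R]_n.

Lemma dotvC (x y : V) : dotv x y = dotv y x.
Proof. by rewrite /dotv; apply: eq_bigr => i _; rewrite mulrC. Qed.

Lemma dotvDl (x y z : V) : dotv (x + y) z = dotv x z + dotv y z.
Proof. by rewrite /dotv -big_split; apply: eq_bigr => i _; rewrite mxE mulrDl. Qed.

Lemma dotvNl (x z : V) : dotv (- x) z = - dotv x z.
Proof. by rewrite /dotv -sumrN; apply: eq_bigr => i _; rewrite mxE mulNr. Qed.

Lemma dotv0l (z : V) : dotv 0 z = 0.
Proof. by rewrite /dotv big1 // => i _; rewrite mxE mul0r. Qed.

Lemma dotv0r (z : V) : dotv z 0 = 0.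
Proof. by rewrite dotvC dotv0l. Qed.

Lemma dotvNr (x z : V) : dotv z (- x) = - dotv z x.
Proof. by rewrite dotvC dotvNl dotvC. Qed.

Lemma dotv_suml m (F : 'I_m -> V) (z : V) :
  dotv (\sum_(i < m) F i) z = \sum_(i < m) dotv (F i) z.
Proof.
apply: (big_morph (fun x => dotv x z)); [move=> x y; exact: dotvDl | exact: dotv0l].
Qed.

Lemma dotvv0 (y : V) : dotv y y <= 0 -> y = 0.
Proof.
move=> hy.
have ge : forall i : 'I_n, true -> 0 <= y 0 i * y 0 i.
  by move=> i _; rewrite -expr2 sqr_ge0.
have h0 : \sum_(i < n) y 0 i * y 0 i = 0.
  apply: le_anti; rewrite hy /=; exact: sumr_ge0.
apply/rowP => i; rewrite mxE.
have := psumr_eq0P ge h0 (erefl true).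
by move=> h; apply/eqP; rewrite -[_ == 0]orbb -mulf_eq0 h.
Qed.

Lemma dotv_cont (b : V) : continuous (fun q : V => dotv q b).
Proof.
rewrite /dotv.
apply: (@continuous_big _ _ +%R 0 xpredT add_continuous) => i _.
move=> q; apply: cvgMr_tmp; [exact: nbhs_filter | exact: (@coord_continuous R 1 n 0 i q)].
Qed.

Lemma perp_closed (b : V) (A : set V) y :
  (forall q, A q -> dotv q b = 0) -> closure A y -> dotv y b = 0.
Proof.
move=> HA cl.
have : closure ((fun q => dotv q b) @^-1` [set 0]) y.
  by apply: closureS cl => q /HA.
apply: preimage_closed.
- move=> x _; exact: dotv_cont.
- exact: closed_eq.
Qed.

Variable H : svmap R n.
Hypothesis cone : convex_process H.

Notation L := (Lminus H).

Lemma H0 : H 0 0. Proof. by case: cone. Qed.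
Lemma Hadd a b c d : H a b -> H c d -> H (a + c) (b + d).
Proof. by case: cone => _ [hA _] h1 h2; exact: (hA (a, b) (c, d)). Qed.
Lemma Hscale t a b : 0 <= t -> H a b -> H (t *: a) (t *: b).
Proof. by case: cone => _ [_ hS] ht h; exact: (hS t (a, b)). Qed.

Lemma L0 : L 0 0. Proof. by split; rewrite ?oppr0; exact: H0. Qed.
Lemma Ladd a b c d : L a b -> L c d -> L (a + c) (b + d).
Proof.
move=> [h1 h2] [h3 h4]; split; first exact: Hadd.
by rewrite !opprD; exact: Hadd.
Qed.
Lemma Lopp a b : L a b -> L (- a) (- b).
Proof. by move=> [h1 h2]; split; rewrite ?opprK. Qed.
Lemma Lscale t a b : L a b -> L (t *: a) (t *: b).
Proof.
move=> [h1 h2]; case: (leP 0 t) => ht.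
  by split; rewrite -?scalerN; apply: Hscale.
have ht' : 0 <= - t by rewrite oppr_ge0 ltW.
split.
  by have := @Hscale (- t) _ _ ht' h2; rewrite !scalerN !scaleNr !opprK.
by have := @Hscale (- t) _ _ ht' h1; rewrite !scaleNr.
Qed.
Lemma Lsum m (F G : 'I_m -> V) : (forall i, L (F i) (G i)) ->
  L (\sum_(i < m) F i) (\sum_(i < m) G i).
Proof.
move=> hFG; apply: (big_ind2 L); [exact: L0 | exact: Ladd | by move=> i _].
Qed.

Definition Rm (m : nat) : set V :=
  [set xi | exists x : nat -> V,
     x 0%N = 0 /\ x m = xi /\ (forall k, (k < m)%N -> L (x k) (x k.+1))].

Lemma Rm0 m : Rm m 0.
Proof. by exists (fun _ => 0); split => //; split => // k _; exact: L0. Qed.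
Lemma RmD m a b : Rm m a -> Rm m b -> Rm m (a + b).
Proof.
move=> [x [x0 [xm hx]]] [y [y0 [ym hy]]].
exists (fun k => x k + y k); split; first by rewrite x0 y0 addr0.
split; first by rewrite xm ym.
by move=> k hk; apply: Ladd; [exact: hx | exact: hy].
Qed.
Lemma RmZ m t a : Rm m a -> Rm m (t *: a).
Proof.
move=> [x [x0 [xm hx]]]; exists (fun k => t *: x k).
split; first by rewrite x0 scaler0.
by split; [rewrite xm | move=> k hk; apply: Lscale; exact: hx].
Qed.
Lemma Rm_mono m m' b : (m <= m')%N -> Rm m b -> Rm m' b.
Proof.
move=> hm [x [x0 [xm hx]]].
set p := (m' - m)%N.
exists (fun k => if (k < p)%N then 0 else x (k - p)%N); split.
  by case: ifP => // _; rewrite sub0n x0.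
split.
  rewrite ltnNge /p leq_subr /= subKn //.
move=> k hk /=.
case: (ltnP k p) => hkp.
  case: ifP => _; first exact: L0.
  have -> : (k.+1 - p = 0)%N by apply/eqP; rewrite subn_eq0.
  rewrite x0; exact: L0.
rewrite ltnNge (leq_trans hkp (leqnSn k)) /= subSn //.
apply: hx.
rewrite /p in hkp hk *.
rewrite ltn_subLR //.
by rewrite subnK.
Qed.

Lemma stab : exists N, forall b, Rminus H b -> Rm N b.
Proof.
case: (pselect (exists N, forall b, Rminus H b -> Rm N b)) => // nex.
exfalso.
have step : forall N, exists b, Rminus H b /\ ~ Rm N b.
  move=> N; apply: contrapT => hn; apply: nex; exists N => b hb.
  apply: contrapT => nb; apply: hn; by exists b.
have ind : forall k, exists m (A : 'M[R]_(k, n)),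
    \rank A = k /\ forall u : 'rV_k, Rm m (u *m A).
  elim => [|k [m [A [rA hA]]]].
    exists 0%N, 0; split; first exact: mxrank0.
    by move=> u; rewrite mulmx0; exact: Rm0.
  have [b [[m' [x [x0 [xm st]]]] nb]] := step m.
  have bm' : Rm m' b by exists x.
  exists (maxn m m'), (col_mx b A : 'M[R]_((1 + k)%N, n)); split.
    apply/eqP; rewrite eqn_leq rank_leq_row /=.
    have e : \rank (b + A)%MS = \rank (col_mx b A) by rewrite (addsmxE b A).
    rewrite -e -{1}rA; apply: rank_ltmx.
    rewrite ltmxE addsmxSr /=; apply/negP => sub; apply: nb.
    have : (b <= A)%MS by apply: submx_trans (addsmxSl b A) sub.
    by case/submxP => D ->; exact: hA.
  move=> u; pose u' : 'M[R]_(1, 1 + k) := u.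
  have e2 := mul_row_col (lsubmx u') (rsubmx u') b A.
  have e3 : u *m col_mx b A = lsubmx u' *m b + rsubmx u' *m A.
    by rewrite -e2 hsubmxK.
  rewrite e3 [lsubmx u']mx11_scalar mul_scalar_mx.
  apply: RmD.
    by apply: RmZ; apply: Rm_mono bm'; exact: leq_maxr.
  by apply: Rm_mono (hA _); exact: leq_maxl.
have [m [A [rA _]]] := ind n.+1.
by have := rank_leq_col A; rewrite rA ltnn.
Qed.

Lemma dual_perp (D : svmap R n)
  (hD : forall q p x y, D q p -> L x y -> dotv p x = dotv q y) :
  forall q, feasible D q -> forall b, Rminus H b -> dotv q b = 0.
Proof.
move=> q [Q [Q0 tr]] b [m [x [x0 [xm st]]]].
rewrite -Q0 -xm.
elim: m Q {Q0} tr st {xm} => [|m IH] Q tr st; first by rewrite x0 dotv0r.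
rewrite -(hD _ _ _ _ (tr 0%N) (st m (ltnSn m))).
apply: (IH (fun k => Q k.+1)) => [k|k hk]; first exact: tr.
by apply: st; rewrite ltnS ltnW.
Qed.

Lemma pos_perp q : feasible (pos_dual H) q -> forall b, Rminus H b -> dotv q b = 0.
Proof.
apply: dual_perp => q' p x y hp [h1 h2].
apply: le_anti; rewrite hp //=.
have := hp _ _ h2; rewrite dotvNr dotvNr lerN2 => ->//.
Qed.

Lemma neg_perp q : feasible (neg_dual H) q -> forall b, Rminus H b -> dotv q b = 0.
Proof.
apply: dual_perp => q' p x y hp [h1 h2].
apply: le_anti; rewrite hp //= andbT.
by have := hp _ _ h2; rewrite dotvNr dotvNr lerN2.
Qed.

Lemma main_zero :
  (forall z : V, exists a b, dom H a /\ Rminus H b /\ z = a + b) ->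
  forall y, neg_polar (feasible H) y -> (forall b, Rminus H b -> dotv y b = 0) ->
  y = 0.
Proof.
move=> hdec y hp hperp.
have [N hN] := stab.
have dec : forall z : V, exists ab : V * V,
    dom H ab.1 /\ Rminus H ab.2 /\ z = ab.1 + ab.2.
  by move=> z; have [a [b h]] := hdec z; exists (a, b).
have [f hf] := choice dec.
have sy : forall a : V, exists y', dom H a -> H a y'.
  move=> a; case: (pselect (dom H a)) => [[y' hy]|na]; first by exists y'.
  by exists 0.
have [g hg] := choice sy.
pose a := fun k => iter k (fun a => (f (g a)).1) (f y).1.
pose bb := fun k => (f (g (a k))).2.
have domA : forall k, dom H (a k).
  by case => [|k]; [case: (hf y) | case: (hf (g (a k)))].
have stepH : forall k, H (a k) (a k.+1 + bb k).
  move=> k; have := hg _ (domA k).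
  by case: (hf (g (a k))) => _ [_ e]; rewrite {1}e.
have bbR : forall k, Rm N.+1 (bb k).
  move=> k; apply: (@Rm_mono N N.+1) => //; apply: hN.
  by case: (hf (g (a k))) => _ [].
have [U hU] := choice bbR.
pose d := fun k => \sum_(i < N.+1) U (k + i)%N (N - i)%N.
have claim : forall k, L (d k) (bb k + d k.+1).
  move=> k.
  have : L (d k) (\sum_(i < N.+1) U (k + i)%N (N - i).+1).
    apply: Lsum => i; case: (hU (k + i)%N) => _ [_ st]; apply: st.
    by rewrite ltnS leq_subr.
  congr (L _ _).
  rewrite big_ord_recl /= addn0 subn0.
  case: (hU k) => _ [-> _]; congr (_ + _).
  rewrite /d big_ord_recr /= subnn.
  case: (hU (k.+1 + N)%N) => -> _; rewrite addr0.
  apply: eq_bigr => i _; rewrite /bump /= add1n addnS addSn subnSK //.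
pose x := fun k => a k - d k.
have trx : trajectory H x.
  move=> k; have := @Hadd _ _ _ _ (stepH k) (@Lopp _ _ (claim k)).1.
  by rewrite opprD addrA addrK.
have fx : feasible H (x 0%N) by exists x.
have hx := hp _ fx.
have ey : y = x 0%N + d 0%N + (f y).2.
  rewrite /x subrK; by case: (hf y) => _ [_ e].
apply: dotvv0.
rewrite {1}ey !dotvDl.
have -> : dotv (f y).2 y = 0.
  by rewrite dotvC; apply: hperp; case: (hf y) => _ [].
have -> : dotv (d 0%N) y = 0.
  rewrite /d dotv_suml big1 // => i _.
  rewrite dotvC; apply: hperp.
  case: (hU (0 + i)%N) => u0 [_ st].
  exists (N - i)%N, (U (0 + i)%N); split => //; split => // k hk.
  apply: st; apply: (leq_trans hk); exact: leq_trans (leq_subr _ _) (leqnSn _).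
by rewrite !addr0 -dotvDl; exact: hx.
Qed.

End Aux.

Theorem lemma2 (R : realType) (n : nat) (H : svmap R n) :
  convex_process H ->
  (forall z : 'rV[R]_n, exists a b, dom H a /\ Rminus H b /\ z = a + b) ->
  neg_polar (feasible H) `&` closure (feasible (pos_dual H)) = [set 0] /\
  neg_polar (feasible H) `&` closure (feasible (neg_dual H)) = [set 0].
Proof.
move=> cone hdec.
have zero_in : forall D : svmap R n, D 0 0 ->
    (neg_polar (feasible H) `&` closure (feasible D)) 0.
  move=> D D0; split; first by move=> x _; rewrite dotv0r.
  apply: subset_closure; exists (fun _ => 0); split => // k.
split; apply/seteqP; split.
- move=> y [hp hc]; apply: (@main_zero R n H cone hdec y hp) => b hb.
  by apply: (@perp_closed R n b (feasible (pos_dual H)) y _ hc) => q hq; exact: (@pos_perp R n H q hq b hb).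
- move=> y ->; apply: zero_in => x y' _; by rewrite !dotv0l lexx.
- move=> y [hp hc]; apply: (@main_zero R n H cone hdec y hp) => b hb.
  by apply: (@perp_closed R n b (feasible (neg_dual H))) hc => q hq; exact: (@neg_perp R n H q hq b hb).
- move=> y ->; apply: zero_in => x y' _; by rewrite !dotv0l lexx.
Qed.
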